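(* Let $q$ be a prime power and $m>1$ an integer. Let $L_1(x)\in\mathbf{F}_{q^m}[x]$ be a linearized polynomial that is a permutation polynomial of $\mathbf{F}_{q^m}$, and let $L_2(x)\in\mathbf{F}_{q^m}[x]$ be a linearized polynomial. Let $b\in\mathbf{F}_q$, $\gamma\in\mathbf{F}_{q^m}$, let $h:\mathbf{F}_q\to\mathbf{F}_q$ be a map, and let $f:\mathbf{F}_{q^m}\to\mathbf{F}_q$ be a surjective map. Suppose $L_1^{-1}(L_2(\gamma))$ is a $b$-linear translator of $f$, where $L_1^{-1}$ denotes the inverse of the bijection $x\mapsto L_1(x)$ of $\mathbf{F}_{q^m}$. Then $L_1(x)+L_2(\gamma)h(f(x))$ is a permutation polynomial of $\mathbf{F}_{q^m}$ if and only if either $L_2(\gamma)=0$ or $x+b\,h(x)$ is a permutation polynomial of $\mathbf{F}_q$.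
   Context: A linearized polynomial over $\mathbf{F}_{q^m}$ is a polynomial of the form $\sum_{i=0}^{m-1}a_i x^{q^i}$ with $a_i\in\mathbf{F}_{q^m}$. Linear translator: let $f:\mathbf{F}_{q^m}\to\mathbf{F}_q$, $a\in\mathbf{F}_q$ and $\alpha$ a nonzero element of $\mathbf{F}_{q^m}$; $\alpha$ is an $a$-linear translator of $f$ if $f(x+u\alpha)-f(x)=ua$ for all $x\in\mathbf{F}_{q^m}$ and all $u\in\mathbf{F}_q$. A permutation polynomial (or map) of a finite field $K$ is one inducing a bijection $K\to K$. *)

(* Defs.v *)
(* F_q is modelled by F : finFieldType (q := #|F|, automatically
   a prime power), F_{q^m} by L : fieldExtType F with m := \dim {:L}. *)
From HB Require Import structures.
From mathcomp Require Import all_boot all_order all_algebra all_field.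
Set Implicit Arguments. Unset Strict Implicit. Unset Printing Implicit Defensive.
Import GRing.Theory.
Local Open Scope ring_scope.

Definition linearized (F : finFieldType) (L : fieldExtType F) (p : {poly L}) : Prop :=
  exists a : 'I_(\dim {: L}%VS) -> L,
    p = \sum_(i < \dim {: L}%VS) a i *: 'X^(#|F| ^ i)%N.

Definition is_perm (K : Type) (g : K -> K) : Prop := bijective g.

Definition linear_translator (F : finFieldType) (L : fieldExtType F)
    (f : L -> F) (alpha : L) (b : F) : Prop :=
  alpha != 0 /\ forall (x : L) (u : F), f (x + u%:A * alpha) - f x = u * b.

(* Main.v *)
Require Import Defs.
From HB Require Import structures.
From mathcomp Require Import all_boot all_order all_algebra all_field all_fingroup all_solvable.
Import GRing.Theory.
Local Open Scope ring_scope.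

Section Lin.
Variables (F : finFieldType) (L : fieldExtType F).

Lemma pnat_cardF : [pchar L].-nat #|F|.
Proof.
have [p pr_p pch] := finPcharP F.
have := abelem_pgroup (fin_ring_pchar_abelem pch).
rewrite /pgroup cardsT => H.
apply: (sub_in_pnat _ H) => r _; rewrite inE => /eqP ->.
by rewrite (pchar_lalg L).
Qed.

Lemma expF_pow (u : F) i : u ^+ (#|F| ^ i) = u.
Proof.
elim: i => [|i IH]; first by rewrite expn0 expr1.
by rewrite expnS exprM expf_card IH.
Qed.

Lemma lin_add (p : {poly L}) x y : linearized p -> p.[x + y] = p.[x] + p.[y].
Proof.
move=> [a ->]; rewrite !horner_sum -big_split /=; apply: eq_bigr => i _.
rewrite !hornerZ !hornerXn -mulrDr; congr (_ * _).
apply: exprDn_pchar; rewrite pnatX; apply/orP; left; exact: pnat_cardF.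
Qed.

Lemma lin_scale (p : {poly L}) (u : F) x : linearized p -> p.[u%:A * x] = u%:A * p.[x].
Proof.
move=> [a ->]; rewrite !horner_sum mulr_sumr; apply: eq_bigr => i _.
rewrite !hornerZ !hornerXn !mulr_algl exprZn expF_pow.
by rewrite scalerAr.
Qed.
End Lin.

Theorem theorem4p1 (F : finFieldType) (L : fieldExtType F)
    (L1 L2 : {poly L}) (L1inv : L -> L) (b : F) (gamma : L)
    (h : F -> F) (f : L -> F) :
  (1 < \dim {: L}%VS)%N ->
  linearized L1 -> is_perm (fun x => L1.[x]) ->
  cancel (fun x => L1.[x]) L1inv -> cancel L1inv (fun x => L1.[x]) ->
  linearized L2 ->
  (forall y : F, exists x : L, f x = y) ->
  linear_translator f (L1inv L2.[gamma]) b ->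
  (is_perm (fun x : L => L1.[x] + L2.[gamma] * (h (f x))%:A)
   <-> L2.[gamma] = 0 \/ is_perm (fun x : F => x + b * h x)).
Proof.
move=> _ lin1 [g1 c1 c1'] K1 K1' _ fsurj [anz tr].
have L10 : L1.[0] = 0.
  by have := @lin_scale F L L1 0 0 lin1; rewrite scale0r !mul0r.
set c := L2.[gamma] in anz *; set al := L1inv c in anz tr.
have Gdef : forall x, L1.[x] + c * (h (f x))%:A = L1.[x + (h (f x))%:A * al].
  move=> x; rewrite lin_add // lin_scale // /al K1' mulrC //.
have fphi : forall x, f (x + (h (f x))%:A * al) = f x + b * h (f x).
  move=> x; have /eqP := tr x (h (f x)).
  by rewrite subr_eq => /eqP ->; rewrite addrC mulrC.
split.
- case: (eqVneq c 0) => [-> |cnz]; first by left.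
  move=> [G cG cG']; right.
  have psurj : forall z : F, exists y, y + b * h y = z.
    move=> z; have [x fx] := fsurj z.
    have [x0 Hx0] : exists x0, L1.[x0] + c * (h (f x0))%:A = L1.[x]  by exists (G L1.[x]); exact: cG'.
    rewrite Gdef in Hx0.
    exists (f x0); rewrite -fphi -fx; congr f.
    by rewrite -[x0 + _]K1 Hx0 K1.
  have psurj' z : exists y, y + b * h y == z by have [y /eqP] := psurj z; exists y.
  pose s z := xchoose (psurj' z).
  have sK : cancel s (fun y => y + b * h y) by move=> z; apply/eqP; exact: (xchooseP (psurj' z)).
  have [s' s1 s2] : bijective s by apply: injF_bij; exact: can_inj sK.
  exists s => y //.
  by rewrite -[y in LHS]s2 sK s2.
- move=> H.
  have phi_inj : injective (fun x => x + (h (f x))%:A * al).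
    move=> x y /= E.
    have Efy : f x = f y.
      have := congr1 f E; rewrite !fphi.
      case: H => [c0|[p' p1 p2] E2]; first by move: anz; rewrite /al c0 -{1}L10 K1 eqxx.
      by rewrite -[f x]p1 E2 p1.
    by move: E; rewrite Efy => /addIr.
  have inj : injective (fun x : L => L1.[x] + c * (h (f x))%:A).
    move=> x y /=; rewrite !Gdef => /(can_inj K1) E.
    exact: phi_inj.
  exact: (@injF_bij (finvect_type L) _ inj).
Qed.
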